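(* Let $n\ge 1$, $m\ge 2$, $0\le k\le n-1$ with $(m,k)\ne(2,0)$. Then the class $\mathcal{C}^k_{ac}$ of all complete $k$-bounded acyclic CP-nets over $n$ variables of domain size $m$, over the instance space $\mathcal{X}_{swap}$, is not extremal.
   Context: Variables $V=\{v_1,\dots,v_n\}$, each with a finite domain of size $m$. An outcome assigns a value to every variable; $\mathcal{O}_X$ denotes assignments to $X\subseteq V$. A complete CP-net specifies for each $v_i$ a parent set $Pa(v_i)\subseteq V\setminus\{v_i\}$ and, for each context $\gamma\in\mathcal{O}_{Pa(v_i)}$, a strict total order $\succ^{v_i}_\gamma$ on $D_{v_i}$; parents are non-dummy. Acyclic: graph with edges $(v_j,v_i)$, $v_j\in Pa(v_i)$, acyclic; $k$-bounded: all $|Pa(v_i)|\le k$. Improving flip: changing only $v_i$ to a value preferred under $\succ^{v_i}_{o[Pa(v_i)]}$; $o'\succ o$ iff a nonempty sequence of improving flips leads from $o$ to $o'$. A swap is an ordered pair $x=(x.1,x.2)$ of outcomes differing in exactly one variable; $\mathcal{X}_{swap}$ contains exactly one ordering of each such pair (fixed arbitrarily); a CP-net $N$ is the concept $c_N(x)=1$ iff $x.1\succ x.2$. A class $\mathcal{C}$ over $\mathcal{X}$ shatters $S\subseteq\mathcal{X}$ if every labeling of $S$ is realized; it strongly shatters $S$ if some subclass $\mathcal{C}'\subseteq\mathcal{C}$ shatters $S$ and all concepts in $\mathcal{C}'$ agree on every instance of $\mathcal{X}\setminus S$. $\mathcal{C}$ is extremal if it strongly shatters every set it shatters. *)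

(* Defs.v *)
From mathcomp Require Import all_boot all_fingroup.
Set Implicit Arguments. Unset Strict Implicit. Unset Printing Implicit Defensive.

Definition outcome (n m : nat) := {ffun 'I_n -> 'I_m}.

(* A complete CP-net: parent sets and, for each variable, a conditional
   preference table mapping each outcome (through its context) to a strict
   total order on 'I_m, represented by a ranking permutation: value a is
   preferred to b under p iff p a < p b. *)
Record cpnet (n m : nat) := CPNet {
  pa  : 'I_n -> {set 'I_n};
  cpt : 'I_n -> outcome n m -> {perm 'I_m} }.

Definition pref_val (m : nat) (p : {perm 'I_m}) (a b : 'I_m) : bool :=
  (p a < p b)%N.

Definition valid_cpnet n m (N : cpnet n m) : Prop :=
  (forall i, i \notin pa N i) /\
  (forall i (o o' : outcome n m),
      (forall j, j \in pa N i -> o j = o' j) -> cpt N i o = cpt N i o') /\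
  (forall i j, j \in pa N i ->
      exists o o' : outcome n m,
        (forall l, l != j -> o l = o' l) /\ cpt N i o <> cpt N i o').

Definition dep_edge n m (N : cpnet n m) : rel 'I_n := fun a b => a \in pa N b.

Definition acyclic_cpnet n m (N : cpnet n m) : Prop :=
  forall i j, dep_edge N j i -> ~~ connect (dep_edge N) i j.

Definition k_bounded n m (k : nat) (N : cpnet n m) : Prop :=
  forall i, (#|pa N i| <= k)%N.

Definition improving_flip n m (N : cpnet n m) : rel (outcome n m) :=
  fun o o' => [exists i, [forall j, (j != i) ==> (o' j == o j)]
                         && pref_val (cpt N i o) (o' i) (o i)].

Definition cp_prefers n m (N : cpnet n m) (o' o : outcome n m) : bool :=
  [exists o1, improving_flip N o o1 && connect (improving_flip N) o1 o'].

Definition instance n m := (outcome n m * outcome n m)%type.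

Definition cp_concept n m (N : cpnet n m) : instance n m -> bool :=
  fun x => cp_prefers N x.1 x.2.

Definition is_swap n m (x : instance n m) : bool :=
  #|[set i | x.1 i != x.2 i]| == 1.

Definition swap_instance_space n m (X : {set instance n m}) : Prop :=
  (forall x, x \in X -> is_swap x) /\
  (forall o o' : outcome n m, is_swap (o, o') ->
      ((o, o') \in X) (+) ((o', o) \in X)).

(* Concept classes over instance space X (concepts are compared on X only). *)
Definition concept_class (T : Type) := (T -> bool) -> Prop.

Definition shatters (T : finType) (C : concept_class T) (S : {set T}) : Prop :=
  forall L : T -> bool, exists c, C c /\ forall x, x \in S -> c x = L x.

Definition strongly_shatters (T : finType) (X : {set T}) (C : concept_class T)
    (S : {set T}) : Prop :=
  exists C' : concept_class T,
    (forall c, C' c -> C c) /\ shatters C' S /\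
    (forall c c', C' c -> C' c' -> forall x, x \in X -> x \notin S -> c x = c' x).

Definition extremal (T : finType) (X : {set T}) (C : concept_class T) : Prop :=
  forall S : {set T}, S \subset X -> shatters C S -> strongly_shatters X C S.

Definition C_ac (n m k : nat) : concept_class (instance n m) :=
  fun c => exists N : cpnet n m,
    valid_cpnet N /\ acyclic_cpnet N /\ k_bounded k N /\ c = cp_concept N.

(* Main.v *)
Require Import Defs.
From mathcomp Require Import all_boot all_fingroup.
Set Implicit Arguments. Unset Strict Implicit. Unset Printing Implicit Defensive.

Section Gen.
Variables (n m : nat) (N : cpnet n m).
Hypothesis HV : valid_cpnet N.
Hypothesis HA : acyclic_cpnet N.
Local Notation e := (improving_flip N).

Lemma cp_trans a b c : cp_prefers N a b -> cp_prefers N b c -> cp_prefers N a c.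
Proof.
move=> /existsP[o1 /andP[f1 c1]] /existsP[o2 /andP[f2 c2]].
apply/existsP; exists o2; rewrite f2 /=.
apply: connect_trans c2 _; apply: connect_trans (connect1 f1) c1.
Qed.

Lemma no_cycle o : ~~ cp_prefers N o o.
Proof.
apply/negP => /existsP[o1 /andP[f1 c1]].
case: HV => Hself [Hdep _].
pose R := [set x | connect e o x && connect e x o].
pose V := [set i | [exists x in R, x i != o i]].
have o1R : o1 \in R by rewrite inE connect1 //.
have oR : o \in R by rewrite inE connect0.
have [i0 i0V] : exists i, i \in V.
  case/existsP: f1 => i /andP[_ Hp]; exists i; rewrite inE; apply/existsP; exists o1.
  rewrite o1R /=; apply/eqP => E; move: Hp; by rewrite /pref_val E ltnn.
pose Anc u := [set w | [exists i', dep_edge N w i' && connect (dep_edge N) i' u]].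
case: (arg_minnP (fun v => #|Anc v|) i0V) => v vV vmin.
have Hpa : forall u, u \in pa N v -> forall x, x \in R -> x u = o u.
  move=> u uv x xR; apply/eqP; apply/negPn/negP => Hne.
  have uV : u \in V by rewrite inE; apply/existsP; exists x; rewrite xR.
  have := vmin u uV; apply/negP; rewrite -ltnNge; apply: proper_card.
  rewrite properE; apply/andP; split.
    apply/subsetP => w; rewrite !inE => /existsP[i' /andP[d c]].
    apply/existsP; exists i'; rewrite d /=; apply: connect_trans c (connect1 _).
    exact: uv.
  apply/subsetPn; exists u.
    rewrite inE; apply/existsP; exists v; rewrite connect0 andbT; exact: uv.
  rewrite inE; apply/negP => /existsP[i' /andP[d c]].
  by move: (HA d); rewrite c.
have Hcpt : forall x, x \in R -> cpt N v x = cpt N v o.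
  move=> x xR; apply: Hdep => j jv; exact: Hpa.
pose f (x : outcome n m) := cpt N v o (x v).
have step : forall x z, x \in R -> z \in R -> e x z -> (f z <= f x)%N.
  move=> x z xR zR /existsP[i /andP[/forallP Hj Hp]].
  case: (eqVneq i v) => [iv|iv].
    subst i; move: Hp; rewrite /pref_val Hcpt // /f => /ltnW //.
  by rewrite /f (eqP (implyP (Hj v) _)) // eq_sym.
have chain : forall x, x \in R -> forall y, connect e x y -> connect e y o -> (f y <= f x)%N.
  move=> x xR y /connectP[p pth ->]; elim: p x xR pth => [|z p IH] x xR /=; first by [].
  case/andP=> exz pth cy.
  have zR : z \in R.
    rewrite inE; apply/andP; split.
      apply: connect_trans (connect1 exz); by move: xR; rewrite inE => /andP[].
    apply: connect_trans cy; apply/connectP; by exists p.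
  apply: leq_trans (IH z zR pth cy) (step x z xR zR exz).
have vV' : v \in V := vV.
move: vV'; rewrite inE => /existsP[x /andP[xR Hx]].
have xR' := xR; rewrite inE in xR'; case/andP: xR' => ox xo.
have h1 := chain o oR x ox xo.
have h2 := chain x xR o xo (connect0 _ _).
have : f x = f o by apply/val_inj/eqP; rewrite eqn_leq h1 h2.
by move/perm_inj => E; rewrite E eqxx in Hx.
Qed.
End Gen.

Lemma pv_swap m (p : {perm 'I_m}) a b : a != b -> pref_val p b a = ~~ pref_val p a b.
Proof.
move=> ab; rewrite /pref_val.
have ne : (p a : nat) != p b by apply/eqP => /ord_inj/perm_inj E; rewrite E eqxx in ab.
by case: ltngtP ne.
Qed.

Lemma exists_perm m (a b : 'I_m) (beta : bool) : a != b ->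
  exists P : {perm 'I_m}, pref_val P a b = beta.
Proof.
move=> ab; case E: (pref_val (1%g : {perm 'I_m}) a b == beta).
  exists (1%g : {perm 'I_m}); exact: (eqP E).
exists (tperm a b); rewrite /pref_val tpermL tpermR.
move: E; rewrite /pref_val !perm1 => /negbT.
have -> : (b < a)%N = ~~ (a < b)%N.
  have ne : (a : nat) != b by [].
  by case: ltngtP ne.
by case: beta; case: (a < b)%N.
Qed.

Section G2.
Variables (n m : nat).
Implicit Types N : cpnet n m.

Lemma cpt_eq N i (a b : outcome n m) : valid_cpnet N ->
  (forall j, j != i -> a j = b j) -> cpt N i a = cpt N i b.
Proof.
case=> Hs [Hd _] Hab; apply: Hd => j ji; apply: Hab.
by apply/eqP => E; subst j; move: (Hs i); rewrite ji.
Qed.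

Lemma swap_pref N i (a b : outcome n m) : valid_cpnet N -> acyclic_cpnet N ->
  a i != b i -> (forall j, j != i -> a j = b j) ->
  cp_prefers N a b = pref_val (cpt N i b) (a i) (b i).
Proof.
move=> HV HA abi Hab.
case E: (pref_val (cpt N i b) (a i) (b i)).
  apply/existsP; exists a; rewrite connect0 andbT; apply/existsP; exists i.
  rewrite E andbT; apply/forallP => j; apply/implyP => ji; by rewrite Hab.
apply/negbTE/negP => Hp.
have Hq : cp_prefers N b a.
  apply/existsP; exists b; rewrite connect0 andbT; apply/existsP; exists i.
  rewrite (cpt_eq (i:=i) HV Hab) pv_swap // E andbT.
  apply/forallP => j; apply/implyP => ji; by rewrite Hab.
by move: (no_cycle HV HA a); rewrite (cp_trans Hp Hq).
Qed.

Lemma orient_iff N (a b : outcome n m) i y L : valid_cpnet N -> acyclic_cpnet N ->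
  (y = (a, b) \/ y = (b, a)) -> a i != b i -> (forall j, j != i -> a j = b j) ->
  (cp_concept N y = L) <-> (cp_prefers N a b = if y == (a, b) then L else ~~ L).
Proof.
move=> HV HA [->|->] abi Hab; first by rewrite eqxx.
have -> : ((b, a) == (a, b)) = false.
  apply/negbTE/negP => /eqP [E _]; by rewrite E eqxx in abi.
rewrite /cp_concept /= (swap_pref HV HA abi Hab).
have Hba : forall j, j != i -> b j = a j by move=> j /Hab ->.
rewrite (swap_pref (i:=i) HV HA _ Hba); last by rewrite eq_sym.
rewrite (cpt_eq (i:=i) HV Hba) pv_swap //.
by case: L; case: (pref_val _ _ _); split.
Qed.

Lemma transfer M N1 (a b : outcome n m) i y :
  valid_cpnet M -> acyclic_cpnet M -> valid_cpnet N1 -> acyclic_cpnet N1 ->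
  (y = (a, b) \/ y = (b, a)) -> a i != b i -> (forall j, j != i -> a j = b j) ->
  cp_concept M y = cp_concept N1 y -> cp_prefers M a b = cp_prefers N1 a b.
Proof.
move=> VM AM VN AN Hy abi Hab E.
have [h1 _] := orient_iff (cp_concept N1 y) VM AM Hy abi Hab.
have [h2 _] := orient_iff (cp_concept N1 y) VN AN Hy abi Hab.
by rewrite (h1 E) (h2 erefl).
Qed.

Lemma not_ext k (X S : {set instance n m}) (a b : outcome n m) y :
  S \subset X -> y \in X -> y \notin S -> (y = (a, b) \/ y = (b, a)) ->
  shatters (@C_ac n m k) S ->
  (exists L1, forall M, valid_cpnet M -> acyclic_cpnet M ->
     (forall z, z \in S -> cp_concept M z = L1 z) -> cp_prefers M a b) ->
  (exists L2, forall M, valid_cpnet M -> acyclic_cpnet M ->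
     (forall z, z \in S -> cp_concept M z = L2 z) -> cp_prefers M b a) ->
  ~ extremal X (@C_ac n m k).
Proof.
move=> SX yX yS Hy sh [L1 H1] [L2 H2] ext.
have [C' [sub [sh' agr]]] := ext S SX sh.
have [c1 [C1 E1]] := sh' L1; have [c2 [C2 E2]] := sh' L2.
have [M1 [V1 [A1 [_ e1]]]] := sub c1 C1; subst c1.
have [M2 [V2 [A2 [_ e2]]]] := sub c2 C2; subst c2.
have p1 := H1 M1 V1 A1 E1; have p2 := H2 M2 V2 A2 E2.
have := agr _ _ C1 C2 y yX yS; rewrite /cp_concept.
case: Hy => -> /=.
  rewrite p1 => /esym q.
  by move: (no_cycle V2 A2 b); rewrite (cp_trans p2 q).
rewrite p2 => q.
by move: (no_cycle V1 A1 a); rewrite (cp_trans p1 q).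
Qed.
End G2.

Section Pk.
Variables (n m : nat).
Definition pk (X : {set instance n m}) (u w : outcome n m) : instance n m :=
  if (u, w) \in X then (u, w) else (w, u).

Lemma pk_or X u w : pk X u w = (u, w) \/ pk X u w = (w, u).
Proof. rewrite /pk; case: ifP => _; by [left | right]. Qed.

Lemma pk_in X (u w : outcome n m) i : swap_instance_space X ->
  u i != w i -> (forall j, j != i -> u j = w j) -> pk X u w \in X.
Proof.
case=> _ HX uwi Hj.
have sw : is_swap (u, w).
  rewrite /is_swap /=; have -> : [set j | u j != w j] = [set i].
    apply/setP => j; rewrite !inE; case: (eqVneq j i) => [->|ji]; first by rewrite uwi.
    by rewrite Hj // eqxx.
  by rewrite cards1.
have := HX u w sw; rewrite /pk; case: ifP => // _; by rewrite /=.
Qed.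

Definition net0 (P : {perm 'I_m}) : cpnet n m := CPNet (fun _ => set0) (fun _ _ => P).

Lemma net0_ok P k : valid_cpnet (net0 P) /\ acyclic_cpnet (net0 P) /\ k_bounded k (net0 P).
Proof.
split; [|split].
- split; [by move=> i; rewrite inE | split; first by []].
  by move=> i j; rewrite inE.
- by move=> i j; rewrite /dep_edge inE.
- by move=> i; rewrite cards0.
Qed.
End Pk.

Section CaseA.
Variables (n m' k : nat) (hn : (0 < n)%N).
Local Notation m := m'.+3.
Definition v0 : 'I_n := Ordinal hn.
Definition z0 : 'I_m := @Ordinal m 0 isT.
Definition z1 : 'I_m := @Ordinal m 1 isT.
Definition z2 : 'I_m := @Ordinal m 2 isT.
Definition oA (a : 'I_m) : outcome n m := [ffun j => if j == v0 then a else z0].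

Lemma oA_v0 a : oA a v0 = a. Proof. by rewrite ffunE eqxx. Qed.
Lemma oA_off a b j : j != v0 -> oA a j = oA b j.
Proof. by rewrite !ffunE => /negbTE ->. Qed.
Lemma oA_inj a b : oA a = oA b -> a = b.
Proof. move=> E; have := congr1 (fun f : outcome n m => f v0) E; by rewrite /= !oA_v0. Qed.

Lemma perm3 (b1 b2 : bool) : exists P : {perm 'I_m},
  pref_val P z0 z1 = b1 /\ pref_val P z1 z2 = b2.
Proof.
have d01 : z0 != z1 by []. have d02 : z0 != z2 by []. have d12 : z1 != z2 by [].
rewrite /pref_val; case: b1; case: b2.
- exists 1%g; by rewrite !perm1.
- exists (tperm z1 z2); rewrite tpermL tpermR tpermD //; by rewrite eq_sym.
- exists (tperm z0 z1); rewrite tpermL tpermR tpermD //; by rewrite eq_sym.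
- exists (tperm z0 z2); rewrite tpermL tpermR tpermD //; by rewrite eq_sym.
Qed.

Lemma prefA P a b : a != b -> cp_prefers (net0 n P) (oA a) (oA b) = pref_val P a b.
Proof.
move=> ab; have [V [A _]] := net0_ok n P 0.
rewrite (swap_pref (i:=v0) V A); first by rewrite !oA_v0.
  by rewrite !oA_v0.
by move=> j; apply: oA_off.
Qed.

Lemma caseA (X : {set instance n m}) : swap_instance_space X -> ~ extremal X (@C_ac n m k).
Proof.
move=> HX.
have d01 : z0 != z1 by []. have d02 : z0 != z2 by []. have d12 : z1 != z2 by [].
have dd : forall a b, a != b -> oA a v0 != oA b v0 by move=> a b; rewrite !oA_v0.
have off : forall a b j, j != v0 -> oA a j = oA b j by move=> a b j; apply: oA_off.
pose y01 := pk X (oA z0) (oA z1). pose y12 := pk X (oA z1) (oA z2).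
pose y02 := pk X (oA z0) (oA z2).
pose S := [set y01; y12].
have y01X : y01 \in X by apply: pk_in HX (dd _ _ d01) (off _ _).
have y12X : y12 \in X by apply: pk_in HX (dd _ _ d12) (off _ _).
have y02X : y02 \in X by apply: pk_in HX (dd _ _ d02) (off _ _).
have SX : S \subset X by apply/subsetP => z; rewrite !inE => /orP[]/eqP->.
have y02S : y02 \notin S.
  have oeq : forall a b, (oA a == oA b) = (a == b).
    by move=> a b; apply/eqP/eqP => [/oA_inj|->].
  have := pk_or X (oA z0) (oA z2); have := pk_or X (oA z0) (oA z1); have := pk_or X (oA z1) (oA z2).
  rewrite -/y02 -/y01 -/y12 /S => [] [->|->] [->|->] [->|->];
    rewrite !inE !xpair_eqE !oeq ?eqxx ?[z1 == z0]eq_sym ?[z2 == z0]eq_sym ?[z2 == z1]eq_sym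
      ?(negbTE d01) ?(negbTE d02) ?(negbTE d12) ?andbF ?andFb //.
apply: (not_ext (a := oA z0) (b := oA z2) SX y02X y02S (pk_or _ _ _)).
- move=> L.
  have [P [h1 h2]] := perm3 (if y01 == (oA z0, oA z1) then L y01 else ~~ L y01)
                            (if y12 == (oA z1, oA z2) then L y12 else ~~ L y12).
  have [V [A K]] := net0_ok n P k.
  exists (cp_concept (net0 n P)); split; first by exists (net0 n P).
  move=> x; rewrite !inE => /orP[]/eqP->.
    apply/(orient_iff _ V A (pk_or _ _ _) (dd _ _ d01) (off _ _)).
    by rewrite (prefA _ d01) h1.
  apply/(orient_iff _ V A (pk_or _ _ _) (dd _ _ d12) (off _ _)).
  by rewrite (prefA _ d12) h2.
- have [P [h1 h2]] := perm3 true true.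
  have [V [A K]] := net0_ok n P k.
  exists (cp_concept (net0 n P)) => M VM AM HM.
  apply: (@cp_trans _ _ M _ (oA z1)).
    rewrite (transfer VM AM V A (pk_or X _ _) (dd _ _ d01) (off _ _)) ?(prefA _ d01) ?h1 //.
    apply: HM; by rewrite !inE eqxx.
  rewrite (transfer VM AM V A (pk_or X _ _) (dd _ _ d12) (off _ _)) ?(prefA _ d12) ?h2 //.
  apply: HM; by rewrite !inE eqxx orbT.
- have [P [h1 h2]] := perm3 false false.
  have [V [A K]] := net0_ok n P k.
  exists (cp_concept (net0 n P)) => M VM AM HM.
  have e10 : oA z1 v0 != oA z0 v0 by rewrite eq_sym; apply: dd.
  have e21 : oA z2 v0 != oA z1 v0 by rewrite eq_sym; apply: dd.
  have d10 : z1 != z0 by rewrite eq_sym.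
  have d21 : z2 != z1 by rewrite eq_sym.
  have Hy01 : y01 = (oA z1, oA z0) \/ y01 = (oA z0, oA z1) by case: (pk_or X (oA z0) (oA z1)); [right|left].
  have Hy12 : y12 = (oA z2, oA z1) \/ y12 = (oA z1, oA z2) by case: (pk_or X (oA z1) (oA z2)); [right|left].
  apply: (@cp_trans _ _ M _ (oA z1)).
    rewrite (transfer VM AM V A Hy12 e21 (off _ _)); last by apply: HM; rewrite !inE eqxx orbT.
    by rewrite (prefA _ d21) (pv_swap _ d12) h2.
  rewrite (transfer VM AM V A Hy01 e10 (off _ _)); last by apply: HM; rewrite !inE eqxx.
  by rewrite (prefA _ d10) (pv_swap _ d01) h1.
Qed.
End CaseA.

Section CaseB.
Variables (n' k : nat) (hk : (0 < k)%N).
Local Notation n := n'.+2.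
Local Notation m := 2.
Definition w0 : 'I_n := @Ordinal n 0 isT.
Definition w1 : 'I_n := @Ordinal n 1 isT.
Definition b0 : 'I_m := @Ordinal m 0 isT.
Definition b1 : 'I_m := @Ordinal m 1 isT.
Lemma w10 : w1 != w0. Proof. by []. Qed.
Lemma b01 : b0 != b1. Proof. by []. Qed.
Lemma b10 : b1 != b0. Proof. by []. Qed.

Definition oB (a b : 'I_m) : outcome n m :=
  [ffun j => if j == w0 then a else if j == w1 then b else b0].
Lemma oB_w0 a b : oB a b w0 = a. Proof. by rewrite ffunE eqxx. Qed.
Lemma oB_w1 a b : oB a b w1 = b. Proof. by rewrite ffunE (negbTE w10) eqxx. Qed.
Lemma off0 a a' b j : j != w0 -> oB a b j = oB a' b j.
Proof. by rewrite !ffunE => /negbTE ->. Qed.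
Lemma off1 a b b' j : j != w1 -> oB a b j = oB a b' j.
Proof. by rewrite !ffunE => /negbTE ->. Qed.
Lemma oeq a b a' b' : (oB a b == oB a' b') = (a == a') && (b == b').
Proof.
apply/eqP/andP => [E|[/eqP-> /eqP->]] //.
have := congr1 (fun f : outcome n m => f w0) E; have := congr1 (fun f : outcome n m => f w1) E.
by rewrite /= !oB_w0 !oB_w1 => -> ->.
Qed.

Definition net2 (P0 P1 Q : {perm 'I_m}) : cpnet n m :=
  CPNet (fun i => if (i == w0) && (P0 != P1) then [set w1] else set0)
        (fun i o => if i == w0 then (if o w1 == b0 then P0 else P1) else Q).

Lemma net2_ok P0 P1 Q : valid_cpnet (net2 P0 P1 Q) /\ acyclic_cpnet (net2 P0 P1 Q)
   /\ k_bounded k (net2 P0 P1 Q).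
Proof.
have pa_in : forall i j, j \in pa (net2 P0 P1 Q) i -> [/\ i = w0, j = w1 & P0 != P1].
  move=> i j /=; case: (eqVneq i w0) => [->|] /=; last by rewrite inE.
  by case: (P0 != P1) => //; rewrite ?inE // => /eqP ->.
split; [|split].
- split; [|split].
  + move=> i; apply/negP => /pa_in [E1 E2 _]; by move: w10; rewrite -E2 E1 eqxx.
  + move=> i o o' H /=; case: (eqVneq i w0) => [Ei|] //=.
    case: (eqVneq P0 P1) => [->|nP]; first by case: ifP; case: ifP.
    subst i; rewrite H //= nP inE //.
  + move=> i j /pa_in [-> -> nP]; exists (oB b0 b0), (oB b0 b1); split.
      by move=> l; apply: off1.
    rewrite /= ?eqxx !oB_w1 ?eqxx ?(negbTE b10); exact/eqP.
- move=> i j /pa_in [-> -> _]; apply/negP => /connectP [p pth lst].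
  case: p pth lst => [|z p] /=; first by move=> _ E; move: w10; rewrite -E eqxx.
  case/andP => /pa_in [_ E _]; by move: w10; rewrite -E eqxx.
- move=> i /=; case: ifP => _; rewrite ?cards1 ?cards0 //.
Qed.

Lemma pref_w0 P0 P1 Q a a' b : a != a' ->
  cp_prefers (net2 P0 P1 Q) (oB a b) (oB a' b) = pref_val (if b == b0 then P0 else P1) a a'.
Proof.
move=> aa; have [V [A _]] := net2_ok P0 P1 Q.
rewrite (swap_pref (i:=w0) V A); first by rewrite /= ?eqxx !oB_w0 oB_w1.
  by rewrite !oB_w0.
by move=> j; apply: off0.
Qed.

Lemma pref_w1 P0 P1 Q a b b' : b != b' ->
  cp_prefers (net2 P0 P1 Q) (oB a b) (oB a b') = pref_val Q b b'.
Proof.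
move=> bb; have [V [A _]] := net2_ok P0 P1 Q.
rewrite (swap_pref (i:=w1) V A); first by rewrite /= ?(negbTE w10) !oB_w1.
  by rewrite !oB_w1.
by move=> j; apply: off1.
Qed.
End CaseB.

Lemma pk_or' n m (X : {set instance n m}) u w : pk X u w = (w, u) \/ pk X u w = (u, w).
Proof. by case: (pk_or X u w); [right|left]. Qed.

Section CB.
Variables (n' k : nat) (hk : (0 < k)%N).
Local Notation n := n'.+2.
Local Notation m := 2.

Lemma caseB (X : {set instance n m}) : swap_instance_space X -> ~ extremal X (@C_ac n m k).
Proof.
move=> HX.
have d0 : forall a a' b, a != a' -> oB n' a b (w0 n') != oB n' a' b (w0 n') by move=> *; rewrite !oB_w0.
have d1 : forall a b b', b != b' -> oB n' a b (w1 n') != oB n' a b' (w1 n') by move=> *; rewrite !oB_w1.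
have f0 : forall a a' b j, j != (w0 n') -> oB n' a b j = oB n' a' b j by move=> *; apply: off0.
have f1 : forall a b b' j, j != (w1 n') -> oB n' a b j = oB n' a b' j by move=> *; apply: off1.
have b01 := b01; have b10 := b10.
pose o a b := oB n' a b.
pose y1 := pk X (o b0 b0) (o b1 b0). pose y2 := pk X (o b1 b0) (o b1 b1).
pose y3 := pk X (o b1 b1) (o b0 b1). pose y4 := pk X (o b0 b0) (o b0 b1).
pose S := [set y1; y2; y3].
have y1X : y1 \in X by apply: pk_in HX (d0 _ _ _ b01) (f0 _ _ _).
have y2X : y2 \in X by apply: pk_in HX (d1 _ _ _ b01) (f1 _ _ _).
have y3X : y3 \in X by apply: pk_in HX (d0 _ _ _ b10) (f0 _ _ _).
have y4X : y4 \in X by apply: pk_in HX (d1 _ _ _ b01) (f1 _ _ _).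
have SX : S \subset X by apply/subsetP => z; rewrite !inE => /orP[/orP[]|]/eqP->.
have y4S : y4 \notin S.
  have := pk_or X (o b0 b0) (o b1 b0); have := pk_or X (o b1 b0) (o b1 b1);
  have := pk_or X (o b1 b1) (o b0 b1); have := pk_or X (o b0 b0) (o b0 b1).
  rewrite -/y1 -/y2 -/y3 -/y4 /S /o => [] [->|->] [->|->] [->|->] [->|->];
    rewrite !inE !xpair_eqE !oeq ?eqxx ?(negbTE b01) ?(negbTE b10) ?andbF ?andFb //.
have S1 : y1 \in S by rewrite !inE eqxx.
have S2 : y2 \in S by rewrite !inE eqxx orbT.
have S3 : y3 \in S by rewrite !inE eqxx !orbT.
apply: (not_ext (a := o b0 b0) (b := o b0 b1) SX y4X y4S (pk_or _ _ _)).
- move=> L.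
  have [P0 h0] := exists_perm (if y1 == (o b0 b0, o b1 b0) then L y1 else ~~ L y1) b01.
  have [Q hq] := exists_perm (if y2 == (o b1 b0, o b1 b1) then L y2 else ~~ L y2) b01.
  have [P1 h1] := exists_perm (if y3 == (o b1 b1, o b0 b1) then L y3 else ~~ L y3) b10.
  have [V [A K]] := net2_ok n' hk P0 P1 Q.
  exists (cp_concept (net2 n' P0 P1 Q)); split; first by exists (net2 n' P0 P1 Q).
  move=> x; rewrite !inE => /orP[/orP[]|]/eqP->.
  + apply/(orient_iff _ V A (pk_or _ _ _) (d0 _ _ _ b01) (f0 _ _ _)).
    by rewrite /o (pref_w0 n' hk _ _ _ _ b01) eqxx h0.
  + apply/(orient_iff _ V A (pk_or _ _ _) (d1 _ _ _ b01) (f1 _ _ _)).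
    by rewrite /o (pref_w1 n' hk _ _ _ _ b01) hq.
  + apply/(orient_iff _ V A (pk_or _ _ _) (d0 _ _ _ b10) (f0 _ _ _)).
    by rewrite /o (pref_w0 n' hk _ _ _ _ b10) (negbTE b10) h1.
- have [P0 h0] := exists_perm true b01.
  have [Q hq] := exists_perm true b01.
  have [P1 h1] := exists_perm true b10.
  have [V [A K]] := net2_ok n' hk P0 P1 Q.
  exists (cp_concept (net2 n' P0 P1 Q)) => M VM AM HM.
  apply: (@cp_trans _ _ M _ (o b1 b0)).
    rewrite (transfer VM AM V A (pk_or X _ _) (d0 _ _ _ b01) (f0 _ _ _)); last exact: HM.
    by rewrite /o (pref_w0 n' hk _ _ _ _ b01) eqxx h0.
  apply: (@cp_trans _ _ M _ (o b1 b1)).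
    rewrite (transfer VM AM V A (pk_or X _ _) (d1 _ _ _ b01) (f1 _ _ _)); last exact: HM.
    by rewrite /o (pref_w1 n' hk _ _ _ _ b01) hq.
  rewrite (transfer VM AM V A (pk_or X _ _) (d0 _ _ _ b10) (f0 _ _ _)); last exact: HM.
  by rewrite /o (pref_w0 n' hk _ _ _ _ b10) (negbTE b10) h1.
- have [P0 h0] := exists_perm true b10.
  have [Q hq] := exists_perm true b10.
  have [P1 h1] := exists_perm true b01.
  have [V [A K]] := net2_ok n' hk P0 P1 Q.
  exists (cp_concept (net2 n' P0 P1 Q)) => M VM AM HM.
  apply: (@cp_trans _ _ M _ (o b1 b1)).
    rewrite (transfer VM AM V A (pk_or' X _ _) (d0 _ _ _ b01) (f0 _ _ _)); last exact: HM.
    by rewrite /o (pref_w0 n' hk _ _ _ _ b01) (negbTE b10) h1.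
  apply: (@cp_trans _ _ M _ (o b1 b0)).
    rewrite (transfer VM AM V A (pk_or' X _ _) (d1 _ _ _ b10) (f1 _ _ _)); last exact: HM.
    by rewrite /o (pref_w1 n' hk _ _ _ _ b10) hq.
  rewrite (transfer VM AM V A (pk_or' X _ _) (d0 _ _ _ b10) (f0 _ _ _)); last exact: HM.
  by rewrite /o (pref_w0 n' hk _ _ _ _ b10) eqxx h0.
Qed.
End CB.

Theorem proposition5 (n m k : nat) :
  (1 <= n)%N -> (2 <= m)%N -> (k <= n - 1)%N -> (m, k) <> (2%N, 0%N) ->
  forall X : {set instance n m}, swap_instance_space X ->
  ~ extremal X (@C_ac n m k).
Proof.
move=> hn hm hk hmk X HX.
case: m hm hmk X HX => [|[|[|m']]] // _ hmk X HX.
  case: k hk hmk => [|k] hk hmk; first by [].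
  case: n hn hk X HX => [|[|n']] // _ hk X HX.
  exact: (caseB (k:=k.+1) _ HX).
exact: (caseA (k:=k) hn HX).
Qed.
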